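(* Let $R$ be an associative ring with unity and let $\mathbf{K}=(K,\leq_p)$ be an AEC with $K$ a class of left $R$-modules. If the Galois types in $\mathbf{K}$ are pp-syntactic, then $\mathbf{K}$ is $\lambda$-stable for every $\lambda\geq\operatorname{LS}(\mathbf{K})$ such that $\lambda^{|R|+\aleph_0}=\lambda$.
   Context: $\leq_p$ is the pure submodule relation. An AEC $(K,\leq_p)$: $K$ closed under isomorphism and unions of $\leq_p$-chains, with Löwenheim–Skolem number $\operatorname{LS}(\mathbf{K})$. Galois types $\mathbf{gtp}(\bar b/A;N)$ (for $N\in K$, $A\subseteq N$, $\bar b$ a tuple of $N$) are classes of $(\bar b,A,N)$ under the transitive closure of: $(\bar b_1,A,N_1)\sim(\bar b_2,A,N_2)$ iff there are $N'\in K$ and pure embeddings $f_\ell:N_\ell\to N'$ fixing $A$ with $f_1(\bar b_1)=f_2(\bar b_2)$. For $\bar b\in N$ and $M\subseteq N$, $\mathrm{pp}(\bar b/M,N)$ is the set of pp-formulas (existentially quantified finite systems of linear equations) with parameters in $M$ satisfied by $\bar b$ in $N$. Galois types in $\mathbf{K}$ are pp-syntactic if for all $M,N_1,N_2\in K$ with $M\leq_p N_1,N_2$ and tuples $\bar b_1\in N_1$, $\bar b_2\in N_2$: $\mathbf{gtp}(\bar b_1/M;N_1)=\mathbf{gtp}(\bar b_2/M;N_2)$ iff $\mathrm{pp}(\bar b_1/M,N_1)=\mathrm{pp}(\bar b_2/M,N_2)$. $\mathbf{K}$ is $\lambda$-stable if $|\mathbf{gS}(M)|\leq\lambda$ for every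 $M\in K$ of size $\lambda$, where $\mathbf{gS}(M)$ is the set of Galois types of single elements over $M$ in pure extensions in $K$. *)

(* Defs.v *)
From HB Require Import structures.
From mathcomp Require Import all_boot all_algebra.
From Stdlib Require Import Relations.
Set Implicit Arguments. Unset Strict Implicit. Unset Printing Implicit Defensive.
Import GRing.Theory.
Local Open Scope ring_scope.

Section AECModules.
Variable R : pzRingType.

(** Positive primitive (pp) formulas in [n] free variables:
    exists y_1..y_m, /\_{i<k} sum_j A i j x_j + sum_l B i l y_l = 0. *)
Record ppf (n : nat) := PPF {
  pp_m : nat; pp_k : nat;
  pp_A : 'I_pp_k -> 'I_n -> R;
  pp_B : 'I_pp_k -> 'I_pp_m -> R }.

Arguments pp_m {n}. Arguments pp_k {n}. Arguments pp_A {n}. Arguments pp_B {n}.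

Definition pp_sat (M : lmodType R) n (phi : ppf n) (x : 'I_n -> M) : Prop :=
  exists y : 'I_(pp_m phi) -> M,
    forall i : 'I_(pp_k phi),
      \sum_(j < n) pp_A phi i j *: x j + \sum_(l < pp_m phi) pp_B phi i l *: y l = 0.

Definition pure_emb (M N : lmodType R) (f : M -> N) : Prop :=
  [/\ (forall x y, f (x + y) = f x + f y),
      (forall (r : R) x, f (r *: x) = r *: f x),
      injective f &
      (forall n (phi : ppf n) (x : 'I_n -> M), pp_sat phi (f \o x) -> pp_sat phi x)].

(** The AEC axioms specific to K (coherence, Tarski-Vaught chain axioms etc.
    hold automatically for <=_p); LS is handled through [LS_le]. *)
Definition iso_closed (K : lmodType R -> Prop) : Prop :=
  forall (M N : lmodType R) (f : M -> N) (g : N -> M),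
    K M -> (forall x y, f (x + y) = f x + f y) -> (forall (r : R) x, f (r *: x) = r *: f x) ->
    cancel f g -> cancel g f -> K N.

Definition chain_closed (K : lmodType R -> Prop) : Prop :=
  forall (I : Type) (le : I -> I -> Prop),
    inhabited I -> (forall i, le i i) -> (forall i j k, le i j -> le j k -> le i k) ->
    (forall i j, le i j -> le j i -> i = j) -> (forall i j, le i j \/ le j i) ->
  forall (M : I -> lmodType R) (f : forall i j, le i j -> M i -> M j),
    (forall i, K (M i)) -> (forall i j (h : le i j), pure_emb (f i j h)) ->
    (forall i (h : le i i) x, f i i h x = x) ->
    (forall i j k (hij : le i j) (hjk : le j k) (hik : le i k) x,
        f j k hjk (f i j hij x) = f i k hik x) ->
  forall (N : lmodType R) (g : forall i, M i -> N),
    (forall i x y, g i (x + y) = g i x + g i y) ->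
    (forall i (r : R) x, g i (r *: x) = r *: g i x) ->
    (forall i, injective (g i)) ->
    (forall i j (h : le i j) x, g j (f i j h x) = g i x) ->
    (forall y : N, exists i x, g i x = y) ->
    K N /\ (forall i, pure_emb (g i)).

Definition AEC_modules (K : lmodType R -> Prop) : Prop :=
  iso_closed K /\ chain_closed K.

(** [LS_le K L] : the cardinal |L| satisfies |L| >= LS(K), i.e. |L| is infinite
    and the downward Loewenheim-Skolem property holds with |L|. *)
Definition LS_le (K : lmodType R -> Prop) (L : Type) : Prop :=
  (exists e : nat -> L, injective e) /\
  forall (M : lmodType R) (A : M -> Prop), K M ->
    exists (N : lmodType R) (g : N -> M),
      [/\ K N, pure_emb g, (forall x, A x -> exists y, g y = x) &
          exists h : N -> ({x : M | A x} + L)%type, injective h].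

(** Galois types of n-tuples over a set A: triples (b, A, N), where A sits in N
    through an injective map. *)
Record gtriple (A : Type) (n : nat) := GTriple {
  gt_N : lmodType R; gt_inc : A -> gt_N; gt_b : 'I_n -> gt_N }.

Definition gvalid (K : lmodType R -> Prop) A n (t : gtriple A n) : Prop :=
  K (gt_N t) /\ injective (gt_inc t).

Definition gstep (K : lmodType R -> Prop) A n (t1 t2 : gtriple A n) : Prop :=
  gvalid K t1 /\ gvalid K t2 /\
  exists (N' : lmodType R) (f1 : gt_N t1 -> N') (f2 : gt_N t2 -> N'),
    [/\ K N', pure_emb f1, pure_emb f2,
        (forall a, f1 (gt_inc t1 a) = f2 (gt_inc t2 a)) &
        (forall j, f1 (gt_b t1 j) = f2 (gt_b t2 j))].

Definition gtp_eq (K : lmodType R -> Prop) A n (t1 t2 : gtriple A n) : Prop :=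
  clos_trans _ (@gstep K A n) t1 t2.

Definition tjoin (N : Type) n p (b : 'I_n -> N) (a : 'I_p -> N) : 'I_(n + p) -> N :=
  fun j => match split j with inl j1 => b j1 | inr j2 => a j2 end.

Definition pp_type_eq (M N1 N2 : lmodType R) (i1 : M -> N1) (i2 : M -> N2) n
    (b1 : 'I_n -> N1) (b2 : 'I_n -> N2) : Prop :=
  forall p (phi : ppf (n + p)) (a : 'I_p -> M),
    pp_sat phi (tjoin b1 (i1 \o a)) <-> pp_sat phi (tjoin b2 (i2 \o a)).

Definition pp_syntactic (K : lmodType R -> Prop) : Prop :=
  forall (M N1 N2 : lmodType R) (i1 : M -> N1) (i2 : M -> N2),
    K M -> K N1 -> K N2 -> pure_emb i1 -> pure_emb i2 ->
  forall n (b1 : 'I_n -> N1) (b2 : 'I_n -> N2),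
    gtp_eq K (GTriple i1 b1) (GTriple i2 b2) <-> pp_type_eq i1 i2 b1 b2.

(** |gS(M)| <= |L|: an assignment of elements of L to the representatives
    (b, M, N) with N in K, M <=_p N, which is injective on Galois types. *)
Definition gS_le (K : lmodType R -> Prop) (M : lmodType R) (L : Type) : Prop :=
  exists c : forall (N : lmodType R), (M -> N) -> N -> L,
    forall (N1 N2 : lmodType R) (i1 : M -> N1) (i2 : M -> N2) (b1 : N1) (b2 : N2),
      K N1 -> K N2 -> pure_emb i1 -> pure_emb i2 ->
      c N1 i1 b1 = c N2 i2 b2 ->
      gtp_eq K (GTriple i1 (fun _ : 'I_1 => b1)) (GTriple i2 (fun _ : 'I_1 => b2)).

(** lambda-stability, with lambda = |L|. *)
Definition stable_in (K : lmodType R -> Prop) (L : Type) : Prop :=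
  forall M : lmodType R, K M ->
    (exists (e : M -> L) (d : L -> M), cancel e d /\ cancel d e) ->
    gS_le K M L.

(** lambda^(|R| + aleph_0) = lambda, with lambda = |L|. *)
Definition card_pow_fixed (L : Type) : Prop :=
  exists (e : ((R + nat)%type -> L) -> L) (d : L -> ((R + nat)%type -> L)),
    cancel e d /\ cancel d e.

End AECModules.

(* Main.v *)
Require Import Defs.
From mathcomp Require Import all_boot all_algebra.
From Stdlib Require Import FunctionalExtensionality ClassicalEpsilon.
Set Implicit Arguments. Unset Strict Implicit. Unset Printing Implicit Defensive.
Import GRing.Theory.
Local Open Scope ring_scope.

Section Alg.
Variable R : pzRingType.

Lemma sat_ext (M : lmodType R) n (phi : ppf R n) (x y : 'I_n -> M) :
  (forall t, x t = y t) -> pp_sat phi x -> pp_sat phi y.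
Proof. by move=> H; rewrite (functional_extensionality x y H). Qed.

Lemma sat_sub (M : lmodType R) n (phi : ppf R n) (x y : 'I_n -> M) :
  pp_sat phi x -> pp_sat phi y -> pp_sat phi (fun t => x t - y t).
Proof.
move=> [w1 H1] [w2 H2]; exists (fun l => w1 l - w2 l) => i.
have -> : \sum_(j < n) @pp_A _ _ phi i j *: (x j - y j) =
  \sum_(j < n) @pp_A _ _ phi i j *: x j - \sum_(j < n) @pp_A _ _ phi i j *: y j.
  by rewrite -sumrB; apply: eq_bigr => j _; rewrite scalerBr.
have -> : \sum_(l < pp_m phi) @pp_B _ _ phi i l *: (w1 l - w2 l) =
  \sum_(l < pp_m phi) @pp_B _ _ phi i l *: w1 l - \sum_(l < pp_m phi) @pp_B _ _ phi i l *: w2 l.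
  by rewrite -sumrB; apply: eq_bigr => j _; rewrite scalerBr.
rewrite addrACA -opprD H1 H2; exact: subrr.
Qed.

Lemma sat_add (M : lmodType R) n (phi : ppf R n) (x y : 'I_n -> M) :
  pp_sat phi x -> pp_sat phi y -> pp_sat phi (fun t => x t + y t).
Proof.
move=> [w1 H1] [w2 H2]; exists (fun l => w1 l + w2 l) => i.
have -> : \sum_(j < n) @pp_A _ _ phi i j *: (x j + y j) =
  \sum_(j < n) @pp_A _ _ phi i j *: x j + \sum_(j < n) @pp_A _ _ phi i j *: y j.
  by rewrite -big_split; apply: eq_bigr => j _; rewrite scalerDr.
have -> : \sum_(l < pp_m phi) @pp_B _ _ phi i l *: (w1 l + w2 l) =
  \sum_(l < pp_m phi) @pp_B _ _ phi i l *: w1 l + \sum_(l < pp_m phi) @pp_B _ _ phi i l *: w2 l.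
  by rewrite -big_split; apply: eq_bigr => j _; rewrite scalerDr.
by rewrite addrACA H1 H2 addr0.
Qed.

Lemma add0f (M N : lmodType R) (f : M -> N) :
  (forall x y, f (x + y) = f x + f y) -> f 0 = 0.
Proof. move=> H; apply: (addrI (f 0)); by rewrite addr0 -H addr0. Qed.

Lemma addBf (M N : lmodType R) (f : M -> N) :
  (forall x y, f (x + y) = f x + f y) -> forall x y, f (x - y) = f x - f y.
Proof.
move=> H x y; have := H (x - y) y; rewrite subrK => ->; by rewrite addrK.
Qed.

Lemma sat_map (M N : lmodType R) (f : M -> N) n (phi : ppf R n) (x : 'I_n -> M) :
  (forall x y, f (x + y) = f x + f y) -> (forall (r : R) x, f (r *: x) = r *: f x) ->
  pp_sat phi x -> pp_sat phi (f \o x).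
Proof.
move=> Ha Hs [w H]; exists (f \o w) => i.
have Hsum : forall I (r : seq I) (F : I -> M), f (\sum_(k <- r) F k) = \sum_(k <- r) f (F k).
  move=> I r F; elim: r => [|a r IH]; first by rewrite !big_nil add0f.
  by rewrite !big_cons Ha IH.
rewrite /=.
have -> : \sum_(j < n) @pp_A _ _ phi i j *: f (x j) = f (\sum_(j < n) @pp_A _ _ phi i j *: x j).
  by rewrite Hsum; apply: eq_bigr => j _; rewrite Hs.
have -> : \sum_(l < pp_m phi) @pp_B _ _ phi i l *: f (w l) = f (\sum_(l < pp_m phi) @pp_B _ _ phi i l *: w l).
  by rewrite Hsum; apply: eq_bigr => j _; rewrite Hs.
by rewrite -Ha H add0f.
Qed.

End Alg.

Section Inj.
Variables (X L : Type) (E : (X -> L) -> L) (Ei : injective E).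
Variable (l0 : L) (inr_ : nat -> X) (inr_i : injective inr_).
Variable outn : X -> option nat.
Hypothesis outnK : pcancel inr_ outn.

Definition E' (u : nat -> L) : L :=
  E (fun x => match outn x with Some n => u n | None => l0 end).

Lemma E'_inj : injective E'.
Proof.
move=> u1 u2 /Ei H; apply: functional_extensionality => n.
by have := f_equal (fun F => F (inr_ n)) H; rewrite /= outnK.
Qed.

Fixpoint G (n : nat) (F : seq X -> L) : L :=
  match n with 0 => F [::] | n'.+1 => E (fun x => G n' (fun s => F (x :: s))) end.

Lemma G_inj n : forall F1 F2, G n F1 = G n F2 -> forall s, size s = n -> F1 s = F2 s.
Proof.
elim: n => [|n IH] F1 F2 /=.
  by move=> H [|//] _.
move=> /Ei H [//|x s] /= [Hs].
have := f_equal (fun F => F x) H => /= /IH; exact.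
Qed.

Definition Hinj (F : seq X -> L) : L := E' (fun n => G n F).

Lemma Hinj_inj F1 F2 : Hinj F1 = Hinj F2 -> forall s, F1 s = F2 s.
Proof.
move=> /E'_inj H s; apply: (G_inj (n := size s)) => //.
exact: (f_equal (fun u => u (size s)) H).
Qed.
End Inj.

Section Dec.
Variable R : pzRingType.
Definition X := (R + nat)%type.
Definition getn (x : X) : nat := match x with inr n => n | inl _ => 0%N end.
Definition getr (x : X) : R := match x with inl r => r | inr _ => 0%R end.

Definition decf (p m k : nat) (g : nat -> R) : ppf R (1 + p) :=
  @PPF R (1 + p) m k (fun i j => g (i * (1 + p + m) + j)%N)
                     (fun i l => g (i * (1 + p + m) + ((1 + p) + l))%N).

Definition dec (s : seq X) : {p : nat & ppf R (1 + p)} :=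
  match s with
  | x1 :: x2 :: x3 :: rest =>
      existT _ (getn x1) (decf (getn x1) (getn x2) (getn x3)
                 (fun t => getr (nth (inr 0%N) rest t)))
  | _ => existT _ 0%N (decf 0 0 0 (fun _ => 0%R))
  end.

Lemma dec_surj p (phi : ppf R (1 + p)) : exists s, dec s = existT _ p phi.
Proof.
case: phi => m k A B.
pose d := (1 + p + m)%N.
have d_gt0 : (0 < d)%N by rewrite /d addnAC.
pose h t : R := match @insub _ (fun i => i < k)%N _ (t %/ d)%N,
                      @insub _ (fun u => u < d)%N _ (t %% d)%N with
  | Some i, Some u => match split (u : 'I_(1 + p + m)) with inl j => A i j | inr l => B i l end
  | _, _ => 0%R end.
exists [:: inr p, inr m, inr k & [seq inl (h t) | t <- iota 0 (k * d)]].
rewrite /dec /= /decf.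
have key : forall (i : 'I_k) (u : 'I_d), getr (nth (inr 0%N) [seq inl (h t) | t <- iota 0 (k * d)] (i * d + u)%N) =
   match split (u : 'I_(1 + p + m)) with inl j => A i j | inr l => B i l end.
  move=> i u.
  have Hlt : (i * d + u < k * d)%N.
    apply: (@leq_trans (i.+1 * d)); first by rewrite mulSn addnC ltn_add2r ltn_ord.
    by rewrite leq_mul2r ltn_ord orbT.
  rewrite (nth_map 0%N) ?size_iota // nth_iota // add0n /= /h.
  rewrite divnMDl // divn_small // addn0 modnMDl modn_small //.
  rewrite (insubT (fun i => i < k)%N (ltn_ord i)) (insubT (fun u => u < d)%N (ltn_ord u)) /=.
  have -> : Sub (val i) (ltn_ord i) = i by apply: val_inj.
  have -> : (Sub (val u) (ltn_ord u) : 'I_(1 + p + m)) = u by apply: val_inj.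
  by [].
congr existT; congr PPF; apply: functional_extensionality => i; apply: functional_extensionality => j.
  have := key i (lshift m j); by rewrite /= (unsplitK (inl _ : 'I_(1+p) + 'I_m)).
have := key i (rshift (1 + p) j); by rewrite /= (unsplitK (inr _ : 'I_(1+p) + 'I_m)).
Qed.
End Dec.

Section Main.
Variables (R : pzRingType) (M : lmodType R) (L : Type) (eM : M -> L).
Hypothesis eMi : injective eM.
Variables (l0 l1 : L).
Hypothesis l10 : l1 <> l0.

Definition Sat (N : lmodType R) (i : M -> N) (b : N) (d : {p : nat & ppf R (1 + p)}) (a : nat -> M) : Prop :=
  pp_sat (projT2 d) (tjoin (fun _ : 'I_1 => b) (fun j : 'I_(projT1 d) => i (a (val j)))).

Definition W' (N : lmodType R) (i : M -> N) (b : N) (d : {p : nat & ppf R (1 + p)}) : nat -> L :=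
  match excluded_middle_informative (exists a, Sat i b d a) with
  | left H => let a := proj1_sig (constructive_indefinite_description _ H) in
      fun n => match n with 0 => l1 | n'.+1 => eM (a n') end
  | right _ => fun _ => l0
  end.

Lemma dir (N1 N2 : lmodType R) (i1 : M -> N1) (i2 : M -> N2) b1 b2 p (phi : ppf R (1 + p))
  (a : 'I_p -> M) : pure_emb i1 -> pure_emb i2 ->
  W' i1 b1 (existT _ p phi) = W' i2 b2 (existT _ p phi) ->
  pp_sat phi (tjoin (fun _ : 'I_1 => b1) (i1 \o a)) ->
  pp_sat phi (tjoin (fun _ : 'I_1 => b2) (i2 \o a)).
Proof.
move=> [ad1 sc1 inj1 pu1] [ad2 sc2 inj2 pu2] + Ha; rewrite /W'.
case: excluded_middle_informative => [H1|N1']; last first.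
  exfalso; apply: N1'.
  exists (fun n => match insub n with Some j => a j | None => 0 end); rewrite /Sat /=.
  apply: sat_ext Ha => t; rewrite /tjoin; case: split => // j /=; by rewrite valK.
case: excluded_middle_informative => [H2|N2']; last first.
  by move=> E; have := f_equal (fun u => u 0%N) E.
case: constructive_indefinite_description => r1 Hr1.
case: constructive_indefinite_description => r2 Hr2 /= E.
have Er : forall n, r1 n = r2 n.
  by move=> n; apply: eMi; exact: (f_equal (fun u => u n.+1) E).
pose x := tjoin (fun _ : 'I_1 => (0 : M)) (fun j : 'I_p => a j - r1 (val j)).
have Hx : pp_sat phi x.
  apply: pu1; apply: sat_ext (sat_sub Ha Hr1) => t; rewrite /x /tjoin /=.
  case: split => j /=; first by rewrite subrr (add0f ad1).
  by rewrite (addBf ad1).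
have Hx2 := sat_map ad2 sc2 Hx.
apply: sat_ext (sat_add Hx2 Hr2) => t; rewrite /x /tjoin /=.
case: split => j /=; first by rewrite (add0f ad2) add0r.
by rewrite -Er -ad2 subrK.
Qed.
End Main.

Theorem theorem3p5 (R : pzRingType) (K : lmodType R -> Prop) :
  AEC_modules K -> pp_syntactic K ->
  forall L : Type, LS_le K L -> card_pow_fixed R L -> stable_in K L.
Proof.
move=> _ pps L [[en eni] _] [E [D [ED _]]] M KM [eM [dM [eMK _]]].
have Ei : injective E := can_inj ED.
have eMi : injective eM := can_inj eMK.
pose l0 := en 0%N; pose l1 := en 1%N.
have l10 : l1 <> l0 by move=> /eni.
pose outn := fun x : X R => match x with inr n => Some n | inl _ => None end.
have outnK : pcancel (@inr R nat) outn by [].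
exists (fun N i b => Hinj E l0 outn (fun s => E' E l0 outn (W' eM l0 l1 i b (dec s)))).
move=> N1 N2 i1 i2 b1 b2 KN1 KN2 pi1 pi2 /(Hinj_inj Ei outnK) Hc.
have HW : forall s, W' eM l0 l1 i1 b1 (dec s) = W' eM l0 l1 i2 b2 (dec s).
  by move=> s; apply: (E'_inj Ei outnK); exact: Hc.
apply/(pps M N1 N2 i1 i2 KM KN1 KN2 pi1 pi2) => p phi a.
have [s Hs] := dec_surj phi.
have := HW s; rewrite Hs => Hw.
split; [exact: (dir eMi l10 pi1 pi2 Hw) | exact: (dir eMi l10 pi2 pi1 (esym Hw))].
Qed.
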